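(* Let $m,a,b,t\in\mathbb{N}$ with $m\geq 3$, $a\geq 1$, $t\in\{2,\ldots,m-1\}$ and $(t-1)(am+1)<bm+t<t(am+1)$, let $S=\langle m,\ am+1,\ bm+t\rangle$ (a MANS-semigroup with embedding dimension $3$), $q=\left\lfloor\frac{m-1}{t}\right\rfloor$ and $r=(m-1)\bmod t$. Then \[ \{q(bm+t)+r(am+1)\}\subseteq \mathrm{Maximals}_{\leq_S}(\mathrm{Ap}(S,m))\subseteq\{(q-1)(bm+t)+(t-1)(am+1),\ q(bm+t)+r(am+1)\} \] and, consequently, \[ \{q(bm+t)+r(am+1)-m\}\subseteq\mathrm{PF}(S)\subseteq\{(q-1)(bm+t)+(t-1)(am+1)-m,\ q(bm+t)+r(am+1)-m\}. \]
   Context: $\mathbb{N}=\{0,1,2,\ldots\}$. $\langle A\rangle$ is the submonoid of $(\mathbb{N},+)$ generated by $A$; a numerical semigroup is a submonoid of $\mathbb{N}$ with finite complement. For $n\in S\setminus\{0\}$, $\mathrm{Ap}(S,n)=\{s\in S:s-n\notin S\}$. On $\mathbb{Z}$, $x\leq_S y$ means $y-x\in S$ (a partial order); $\mathrm{Maximals}_{\leq_S}(X)$ is the set of maximal elements of $X$ for $\leq_S$. A pseudo-Frobenius number of $S$ is an $x\in\mathbb{Z}\setminus S$ with $x+s\in S$ for all $s\in S\setminus\{0\}$; $\mathrm{PF}(S)$ is the set of them. A MANS-semigroup is a numerical semigroup with $w(1)<\cdots<w(\mathrm{m}(S)-1)$, where $\mathrm{m}(S)$ is the least element of $S\setminus\{0\}$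 and $w(i)$ the least element of $S$ congruent to $i$ modulo $\mathrm{m}(S)$. $a\bmod b$ is the remainder of the division of $a$ by $b$. *)

(* Defs.v *)
From mathcomp Require Import all_boot all_order all_algebra.
Set Implicit Arguments. Unset Strict Implicit. Unset Printing Implicit Defensive.
Import Order.TTheory GRing.Theory Num.Theory.
Local Open Scope ring_scope.

Inductive gen (A : nat -> Prop) : nat -> Prop :=
| gen0 : gen A 0
| genS : forall a x, A a -> gen A x -> gen A (a + x)%N.

Definition set3 (g1 g2 g3 : nat) : nat -> Prop :=
  fun x => x = g1 \/ x = g2 \/ x = g3.

Definition memZ (S : nat -> Prop) (x : int) : Prop :=
  exists n : nat, x = n%:Z /\ S n.

Definition Apery (S : nat -> Prop) (n : nat) (x : int) : Prop :=
  memZ S x /\ ~ memZ S (x - n%:Z).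

Definition leS (S : nat -> Prop) (x y : int) : Prop := memZ S (y - x).

Definition Maximals (S : nat -> Prop) (X : int -> Prop) (x : int) : Prop :=
  X x /\ forall y, X y -> leS S x y -> y = x.

Definition PF (S : nat -> Prop) (x : int) : Prop :=
  ~ memZ S x /\ forall s : int, memZ S s -> s != 0 -> memZ S (x + s).

(* Main.v *)
Require Import Defs.
From mathcomp Require Import all_boot all_order all_algebra.
From mathcomp Require Import zify.
Import Order.TTheory GRing.Theory Num.Theory.

Lemma gen_add (A : nat -> Prop) g k y : A g -> gen A y -> gen A (k*g + y)%N.
Proof.
move=> Ag Gy; elim: k => [|k IH]; first by rewrite mul0n add0n.
by rewrite mulSn -addnA; apply: genS.
Qed.

Lemma genP g1 g2 g3 x : gen (set3 g1 g2 g3) x <->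
  exists n i j, x = (n*g1 + i*g2 + j*g3)%N.
Proof.
split.
- elim => [|c y [->|[->|->]] _ [n [i [j ->]]]].
  + by exists 0%N, 0%N, 0%N.
  + by exists n.+1, i, j; rewrite mulSn !addnA.
  + by exists n, i.+1, j; lia.
  + by exists n, i, j.+1; lia.
- move=> [n [i [j ->]]].
  rewrite -addnA -[X in (_ + X)%N]addn0 -addnA.
  apply: gen_add; first by left.
  apply: gen_add; first by right; left.
  apply: gen_add; first by right; right.
  exact: gen0.
Qed.

Lemma cm (t a b d e c f : nat) : (e < t)%N -> (f < t)%N -> ((t-1)*a <= b)%N ->
  (d*t + e <= c*t+f)%N -> (d*b + e*a <= c*b + f*a)%N.
Proof. intros. case: (ltngtP d c) => h.
- have h1 : (d.+1 <= c)%N by []. have : (d.+1 * b <= c * b)%N by apply leq_mul.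
  have : (e*a <= (t-1)*a)%N by apply leq_mul; lia. nia.
- have : (c.+1 * t <= d * t)%N by apply leq_mul. nia.
- subst. nia.
Qed.

Section Main.
Variables m a b t : nat.
Hypothesis ht : (2 <= t)%N.
Hypothesis htm : (t <= m - 1)%N.
Hypothesis hba : ((t-1)*a <= b)%N.
Hypothesis hab : (b < t*a)%N.
Hypothesis hm3 : (3 <= m)%N.

Lemma key i j d e : (e < t)%N -> (d*t + e <= i + j*t)%N -> (d*b + e*a <= i*a + j*b)%N.
Proof.
move=> et le.
have di := div.divn_eq i t.
have ft : (i %% t < t)%N by rewrite ltn_pmod //; lia.
move: di ft; move: (i %/ t) (i %% t) => c f di ft.
apply: (@leq_trans ((c+j)*b + f*a)).
  apply: (@cm t a b d e (c+j) f) => //. nia.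
have : (c * b <= c * (t * a))%N by apply leq_mul => //; apply ltnW.
nia.
Qed.

Lemma notin d e n i j : (e < t)%N -> (d*t+e < m)%N ->
  ((d*b+e*a)* m + (d*t+e))%N <> (m + (n* m + i*(a* m+1) + j*(b* m+t)))%N.
Proof.
move=> et lt eq.
have E : (m + (n* m + i*(a* m+1) + j*(b* m+t)) = (n+1+(i*a+j*b))* m + (i+j*t))%N by nia.
rewrite E in eq.
have : ((d*t+e) = (i+j*t) %% m)%N.
  have := f_equal (fun z => z %% m)%N eq => /=.
  by rewrite !modnMDl modn_small.
move=> hm.
have hle : (d*t+e <= i+j*t)%N by rewrite hm leq_mod.
have hk : (d*b+e*a <= i*a+j*b)%N by apply: key.
have : ((d*b+e*a)* m <= (i*a+j*b)* m)%N by apply leq_mul.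
nia.
Qed.

Lemma reach i j : (m <= i + j*t)%N -> exists n i' j',
  (i*(a* m+1) + j*(b* m+t) = m + (n* m + i'*(a* m+1) + j'*(b* m+t)))%N.
Proof.
move=> hm.
have di := div.divn_eq (i + j*t - m) t.
have ft : ((i + j*t - m) %% t < t)%N by rewrite ltn_pmod //; lia.
move: di ft; move: ((i + j*t - m) %/ t) ((i + j*t - m) %% t) => d e di et.
have hk : (d*b + e*a <= i*a + j*b)%N by apply: key => //; lia.
exists (i*a + j*b - (d*b+e*a))%N, e, d.
have E1 : (i*(a * m+1)+j*(b * m+t) = (i*a+j*b)* m + (i+j*t))%N by nia.
have E2 : (e*(a * m+1)+d*(b * m+t) = (d*b+e*a)* m + (d*t+e))%N by nia.
rewrite E1 -addnA E2.
move: hk; move: (d*b+e*a)%N (i*a+j*b)%N => C P hk.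
have : ((P-C)* m + C* m = P* m)%N by rewrite -mulnDl subnK.
move: ((P-C)* m)%N (C* m)%N (P* m)%N => X Y Z.
lia.
Qed.

Local Open Scope ring_scope.
Definition SS := gen (set3 m (a * m + 1) (b * m + t)).

Lemma inS n i j : SS (n * m + i * (a * m + 1) + j * (b * m + t))%N.
Proof. by apply/genP; exists n, i, j. Qed.

Lemma inSsub N n i j : N = (m + (n * m + i * (a * m + 1) + j * (b * m + t)))%N ->
  memZ SS (N%:Z - m%:Z).
Proof.
move=> ->; exists (n * m + i * (a * m + 1) + j * (b * m + t))%N; split; last exact: inS.
lia.
Qed.

Lemma apdec x : Apery SS m x -> exists i j,
  x = (i * (a * m + 1) + j * (b * m + t))%N%:Z /\ (i < t)%N /\ (i + j*t < m)%N.
Proof.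
move=> [[N [-> SN]] nS]. case/genP: SN nS => n [i [j ->]] nS.
case: n nS => [|n] nS; last first.
  by exfalso; apply: nS; apply: (@inSsub _ n i j); nia.
case: (leqP t i) => hi.
  exfalso; apply: nS.
  have [i' ->] : exists i', i = (t + i')%N by exists (i - t)%N; lia.
  have [k hk] : exists k, (t * a = b + 1 + k)%N by exists (t*a - b - 1)%N; lia.
  apply: (@inSsub _ k i' j.+1). nia.
case: (leqP m (i + j*t)) => hm.
  exfalso; apply: nS.
  have [n' [i' [j' E]]] := reach _ _ hm.
  apply: (@inSsub _ n' i' j'). lia.
by exists i, j; split => //; rewrite mul0n add0n.
Qed.

End Main.


Lemma memShift (S : nat -> Prop) m X Y N : (X + Y = N)%N -> memZ S (N%:Z - m%:Z) ->
  memZ S (X%:Z - m%:Z + Y%:Z).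
Proof. move=> <- [M [eM SM]]; exists M; split => //; lia. Qed.

Local Open Scope ring_scope.

Theorem lemma3p20 (m a b t : nat) :
  (3 <= m)%N -> (1 <= a)%N -> (2 <= t)%N -> (t <= m - 1)%N ->
  ((t - 1) * (a * m + 1) < b * m + t)%N ->
  (b * m + t < t * (a * m + 1))%N ->
  let S := gen (set3 m (a * m + 1) (b * m + t)) in
  let q := ((m - 1) %/ t)%N in
  let r := ((m - 1) %% t)%N in
  let x1 : int := (q * (b * m + t) + r * (a * m + 1))%N%:Z in
  let x2 : int := ((q - 1) * (b * m + t) + (t - 1) * (a * m + 1))%N%:Z in
  [/\ (forall x, x = x1 -> Maximals S (Apery S m) x),
      (forall x, Maximals S (Apery S m) x -> x = x2 \/ x = x1),
      (forall x, x = x1 - m%:Z -> PF S x) &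
      (forall x, PF S x -> x = x2 - m%:Z \/ x = x1 - m%:Z)].
Proof.
move=> hm3 ha ht htm H5 H6.
have hba : ((t-1)*a <= b)%N.
  rewrite leqNgt; apply/negP => hlt.
  have : ((b+1) * m <= ((t-1)*a) * m)%N by apply leq_mul => //; lia.
  nia.
have hab : (b < t*a)%N.
  rewrite ltnNge; apply/negP => hle.
  have : ((t*a) * m <= b * m)%N by apply leq_mul.
  nia.
cbv zeta.
have dq := div.divn_eq (m-1) t.
have hr : ((m-1) %% t < t)%N by rewrite ltn_pmod //; lia.
move: ((m-1)%/t)%N ((m-1)%%t)%N dq hr => q r dq hr.
change (gen (set3 m (a * m + 1) (b * m + t))) with (SS m a b t).
have q1 : (1 <= q)%N by nia.
have NI := @notin m a b t ht htm hba hab hm3.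
have RE := @reach m a b t ht htm hba hab hm3.
have AD := @apdec m a b t ht htm hba hab hm3.
have SUB := @inSsub m a b t ht htm hba hab hm3.
have KEY := @key m a b t ht htm hba hab hm3.
have E : forall d e, (d * (b * m + t) + e * (a * m + 1) = (d*b+e*a) * m + (d*t+e))%N.
  by move=> d e; nia.
have memS' : forall N n i j, N = (n * m + i * (a * m + 1) + j * (b * m + t))%N ->
    memZ (SS m a b t) N%:Z.
  by move=> N n i j ->; exists (n * m + i * (a * m + 1) + j * (b * m + t))%N; split => //; apply: inS.
have memD : forall X Y n i j, X = (Y + (n * m + i * (a * m + 1) + j * (b * m + t)))%N ->
    memZ (SS m a b t) (X%:Z - Y%:Z).
  move=> X Y n i j ->; exists (n * m + i * (a * m + 1) + j * (b * m + t))%N; split; last exact: inS.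
  lia.
have x1Ap : Apery (SS m a b t) m (q * (b * m + t) + r * (a * m + 1))%N%:Z.
  split; first by apply: (memS' _ 0%N r q); nia.
  move=> [M [eM SM]]; case/genP: SM eM => n [i [j ->]] eM.
  apply: (NI q r n i j hr); first by nia.
  have : (q * (b * m + t) + r * (a * m + 1) = m + (n * m + i * (a * m + 1) + j * (b * m + t)))%N by lia.
  by rewrite E.
have x2Ap : Apery (SS m a b t) m ((q-1) * (b * m + t) + (t-1) * (a * m + 1))%N%:Z.
  split; first by apply: (memS' _ 0%N (t-1)%N (q-1)%N); nia.
  move=> [M [eM SM]]; case/genP: SM eM => n [i [j ->]] eM.
  apply: (NI (q-1)%N (t-1)%N n i j); first by lia.
    have : ((q-1)*t + t = q * t)%N by rewrite -mulSnr; congr (_ * _)%N; lia.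
    lia.
  have : ((q-1) * (b * m + t) + (t-1) * (a * m + 1) = m + (n * m + i * (a * m + 1) + j * (b * m + t)))%N by lia.
  by rewrite E.
have P2 : forall x, Maximals (SS m a b t) (Apery (SS m a b t) m) x ->
    x = ((q-1) * (b * m + t) + (t-1) * (a * m + 1))%N%:Z \/ x = (q * (b * m + t) + r * (a * m + 1))%N%:Z.
  move=> x [xAp xmax]; have [i [j [ex [hi hij]]]] := AD _ xAp; subst x.
  have hjq : (j <= q)%N.
    rewrite leqNgt; apply/negP => hq.
    have : (q.+1 * t <= j * t)%N by apply leq_mul.
    nia.
  case: (ltngtP j q) => [hjlt | hjgt | hjeq].
  - left; symmetry; apply: xmax => //.
    have [k hk] : exists k, (q-1 = j + k)%N by exists (q-1-j)%N; lia.
    have [l hl] : exists l, (t-1 = i + l)%N by exists (t-1-i)%N; lia.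
    apply: (memD _ _ 0%N l k); rewrite hk hl; nia.
  - by exfalso; lia.
  - right; symmetry; apply: xmax => //.
    have [l hl] : exists l, (r = i + l)%N by exists (r-i)%N; nia.
    apply: (memD _ _ 0%N l 0%N); rewrite hjeq hl; nia.
split.
- move=> x ->; split => // y yAp [M [eM SM]].
  have [i [j [ey [hi hij]]]] := AD _ yAp; subst y.
  have hk : (j*b + i*a <= r*a + q*b)%N by apply: KEY => //; nia.
  have : ((j*b + i*a) * m <= (r*a + q*b) * m)%N by apply leq_mul.
  have := E j i; have := E q r.
  have : (j*t + i <= q*t + r)%N by lia.
  move=> h1 h2 h3 h4.
  have : (j * (b * m + t) + i * (a * m + 1) <= q * (b * m + t) + r * (a * m + 1))%N.
    rewrite h2 h3. lia.
  move=> hle.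
  have hM : M = 0%N by lia.
  subst M. lia.
- exact: P2.
- move=> x ->; split; first exact: x1Ap.2.
  move=> s [N [-> SN]] s0; case/genP: SN s0 => n [i [j ->]] s0.
  case: n s0 => [|n] s0.
  + case: i s0 => [|i] s0.
    * case: j s0 => [|j] s0; first by exfalso; move: s0; rewrite !mul0n.
      have [n' [i' [j' E']]] := RE r q.+1 (ltac:(nia)).
      apply: memShift; first reflexivity.
      apply: (SUB _ n' i' (j' + j)%N). nia.
    * have [n' [i' [j' E']]] := RE r.+1 q (ltac:(nia)).
      apply: memShift; first reflexivity.
      apply: (SUB _ n' (i' + i)%N (j' + j)%N). nia.
  + apply: memShift; first reflexivity.
    apply: (SUB _ n (r + i)%N (q + j)%N). nia.
- move=> x [nx px].
  have xmAp : Apery (SS m a b t) m (x + m%:Z).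
    split; last by rewrite addrK.
    apply: px; first by apply: (memS' _ 1%N 0%N 0%N); lia.
    apply/eqP; lia.
  have : Maximals (SS m a b t) (Apery (SS m a b t) m) (x + m%:Z).
    split => // y yAp [M [eM SM]].
    case: M eM SM => [|M] eM SM; first by lia.
    exfalso; apply: yAp.2.
    have : memZ (SS m a b t) (x + M.+1%:Z).
      apply: px; first by exists M.+1.
      apply/eqP; lia.
    have -> : y - m%:Z = x + M.+1%:Z by lia.
    by [].
  move/P2 => [h|h]; [left|right]; lia.
Qed.
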